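(* Let $K=3$ and let $l\ge m\ge s\ge 0$ be integers with $m\ge s+2$. Then \[ h(l,\,m,\,s)\ \le\ h(l-1,\,m-1,\,s+2). \]
   Context: For a vector $\vec n=(n_1,n_2,n_3)$ of nonnegative integers, the following random process is run: stocks start at $\vec n^{(0)}=\vec n$; at each step $t=1,2,\dots$, as long as at least two coordinates of $\vec n^{(t-1)}$ are nonzero, an index $i$ is chosen uniformly at random (independently of the past) among the indices with $n_i^{(t-1)}>0$, and $\vec n^{(t)}=\vec n^{(t-1)}-\vec e_i$ ($\vec e_i$ the $i$-th standard unit vector). The process stops at the first time $T$ at which at most one coordinate is nonzero, and $h(\vec n)=\mathbb{E}[T]$. Equivalently, with $\operatorname{support}(\vec n)=\{i:n_i\ne 0\}$: $h(\vec n)=0$ if $|\operatorname{support}(\vec n)|\le1$, and otherwise $h(\vec n)=1+\frac{1}{|\operatorname{support}(\vec n)|}\sum_{i\in\operatorname{support}(\vec n)}h(\vec n-\vec e_i)$. *)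

(* Defs.v *)
From mathcomp Require Import all_boot all_order all_algebra.
Set Implicit Arguments. Unset Strict Implicit. Unset Printing Implicit Defensive.
Import Order.TTheory GRing.Theory Num.Theory.
Local Open Scope ring_scope.

Definition supp3 (a b c : nat) : nat := ((a != 0%N) + (b != 0%N) + (c != 0%N))%N.

(* Each recursive call lowers a+b+c by one, so fuel a+b+c suffices. *)
Fixpoint hfuel (k : nat) (a b c : nat) : rat :=
  match k with
  | 0%N => 0
  | k'.+1 =>
    if (supp3 a b c <= 1)%N then 0
    else 1 + ((if a != 0%N then hfuel k' a.-1 b c else 0)
            + (if b != 0%N then hfuel k' a b.-1 c else 0)
            + (if c != 0%N then hfuel k' a b c.-1 else 0)) / (supp3 a b c)%:R
  end.

(* h(n1,n2,n3) = expected stopping time of the random depletion process (K = 3). *)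
Definition h (a b c : nat) : rat := hfuel (a + b + c) a b c.

(* Main.v *)
Require Import Defs.
From mathcomp Require Import all_boot all_order all_algebra.
From mathcomp Require Import zify.
From mathcomp.algebra_tactics Require Import ring lra.
Import Order.TTheory GRing.Theory Num.Theory.
Local Open Scope ring_scope.

Lemma hfuel_indep k k' a b c : (a + b + c <= k)%N -> (a + b + c <= k')%N ->
  hfuel k a b c = hfuel k' a b c.
Proof.
elim: k k' a b c => [|k IH] [|k'] a b c //= H1 H2.
- have [-> [-> ->]] : a = 0%N /\ b = 0%N /\ c = 0%N by lia.
  by rewrite /supp3.
- have [-> [-> ->]] : a = 0%N /\ b = 0%N /\ c = 0%N by lia.
  by rewrite /supp3.
- case: ifP => // _.
  congr (1 + (_ + _ + _) / _).
  + case: eqP => // /eqP a0; apply: IH; lia.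
  + case: eqP => // /eqP b0; apply: IH; lia.
  + case: eqP => // /eqP c0; apply: IH; lia.
Qed.

Lemma hE a b c : h a b c =
  if (supp3 a b c <= 1)%N then 0
  else 1 + ((if a != 0%N then h a.-1 b c else 0)
          + (if b != 0%N then h a b.-1 c else 0)
          + (if c != 0%N then h a b c.-1 else 0)) / (supp3 a b c)%:R.
Proof.
rewrite /h.
case E: (a + b + c)%N => [|n].
- have [-> [-> ->]] : a = 0%N /\ b = 0%N /\ c = 0%N by lia.
  by rewrite /supp3.
rewrite /=; case: ifP => // _.
congr (1 + (_ + _ + _) / _).
+ case: eqP => // /eqP a0; apply: hfuel_indep; lia.
+ case: eqP => // /eqP b0; apply: hfuel_indep; lia.
+ case: eqP => // /eqP c0; apply: hfuel_indep; lia.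
Qed.

Lemma h_ge0 a b c : 0 <= h a b c.
Proof.
rewrite /h; move: (a + b + c)%N => k.
elim: k a b c => [|k IH] a b c //=.
case: ifP => // _.
apply: addr_ge0 => //; apply: divr_ge0 => //.
by rewrite !addr_ge0 //; case: ifP.
Qed.

Lemma hfuel_sym12 k a b c : hfuel k a b c = hfuel k b a c.
Proof.
elim: k a b c => [|k IH] a b c //=.
have -> : supp3 b a c = supp3 a b c by rewrite /supp3; lia.
case: ifP => // _.
rewrite (IH a.-1) (IH a b.-1) (IH a b c.-1).
congr (1 + _ / _); case: (a != 0%N); case: (b != 0%N); lra.
Qed.

Lemma hfuel_sym23 k a b c : hfuel k a b c = hfuel k a c b.
Proof.
elim: k a b c => [|k IH] a b c //=.
have -> : supp3 a c b = supp3 a b c by rewrite /supp3; lia.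
case: ifP => // _.
rewrite (IH a.-1) (IH a b.-1) (IH a b c.-1).
congr (1 + _ / _); case: (c != 0%N); case: (b != 0%N); lra.
Qed.

Lemma h12 a b c : h a b c = h b a c.
Proof. by rewrite /h hfuel_sym12; congr hfuel; lia. Qed.
Lemma h23 a b c : h a b c = h a c b.
Proof. by rewrite /h hfuel_sym23; congr hfuel; lia. Qed.

Lemma h3 a b c : (0 < a)%N -> (0 < b)%N -> (0 < c)%N ->
  h a b c = 1 + (h a.-1 b c + h a b.-1 c + h a b c.-1) / 3%:R.
Proof.
move=> ha hb hc; rewrite hE.
have -> : supp3 a b c = 3%N by rewrite /supp3; lia.
have -> : (a != 0%N) by lia.
have -> : (b != 0%N) by lia.
by have -> : (c != 0%N) by lia.
Qed.

Lemma h2 a b : (0 < a)%N -> (0 < b)%N ->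
  h a b 0 = 1 + (h a.-1 b 0 + h a b.-1 0) / 2%:R.
Proof.
move=> ha hb; rewrite hE.
have -> : supp3 a b 0 = 2%N by rewrite /supp3; lia.
have -> : (a != 0%N) by lia.
have -> : (b != 0%N) by lia.
by rewrite /= addr0.
Qed.

Lemma h1 a : h a 0 0 = 0.
Proof. by rewrite hE /supp3; case: a. Qed.

Lemma h2S a b : h a.+1 b.+1 0 = 1 + (h a b.+1 0 + h a.+1 b 0) / 2%:R.
Proof. by rewrite h2. Qed.
Lemma h3S a b c : h a.+1 b.+1 c.+1 =
  1 + (h a b.+1 c.+1 + h a.+1 b c.+1 + h a.+1 b.+1 c) / 3%:R.
Proof. by rewrite h3. Qed.

Lemma h010 b : h 0 b 0 = 0.
Proof. by rewrite h12 h1. Qed.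

Lemma hge1 a b : 1 <= h a.+1 b.+1 0.
Proof.
rewrite h2S; have := h_ge0 a b.+1 0; have := h_ge0 a.+1 b 0; lra.
Qed.

Lemma hx1 x : h x 1 0 <= 2.
Proof.
elim: x => [|x IH]; first by rewrite h010.
rewrite h2S h1; lra.
Qed.

Lemma G2n n : forall x y, (x + y <= n)%N -> h x.+1 y.+1 0 <= h x y 0 + 2.
Proof.
elim: n => [|n IH] x y Hn.
  have [-> ->] : x = 0%N /\ y = 0%N by lia.
  by rewrite h010 hx1.
case: x Hn => [|x] Hn; first by rewrite h010 h12 hx1.
case: y Hn => [|y] Hn; first by rewrite h1 hx1.
rewrite (h2S x.+1 y.+1) (h2S x y).
have := IH x y.+1 ltac:(lia); have := IH x.+1 y ltac:(lia); lra.
Qed.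

Lemma G2 x y : h x.+1 y.+1 0 <= h x y 0 + 2.
Proof. exact: (G2n (x + y) x y (leqnn _)). Qed.

Lemma M2n n : forall a b, (a + b <= n)%N -> h a.+1 b.+1 0 + 1 <= h a.+1 b.+1 1.
Proof.
elim: n => [|n IH] a b Hn;
rewrite (h3S a b 0) (h2S a b).
- have [-> ->] : a = 0%N /\ b = 0%N by lia.
  rewrite h010 h1.
  have -> : h 0 1 1 = h 1 1 0 by rewrite h12 h23.
  have -> : h 1 0 1 = h 1 1 0 by rewrite h23.
  have := hge1 0 0; lra.
- have X1 : h a b.+1 0 + 1 <= h a b.+1 1.
    case: a Hn => [|a] Hn.
      have -> : h 0 b.+1 1 = h b.+1 1 0 by rewrite h12 h23.
      rewrite h010; have := hge1 b 0; lra.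
    apply: IH; lia.
  have X2 : h a.+1 b 0 + 1 <= h a.+1 b 1.
    case: b Hn {X1} => [|b] Hn.
      have -> : h a.+1 0 1 = h a.+1 1 0 by rewrite h23.
      rewrite h1; have := hge1 a 0; lra.
    apply: IH; lia.
  lra.
Qed.

Lemma M2 a b : h a.+1 b.+1 0 + 1 <= h a.+1 b.+1 1.
Proof. exact: (M2n (a + b) a b (leqnn _)). Qed.

Ltac hperm := solve [ reflexivity | rewrite h12; reflexivity | rewrite h23; reflexivity
  | rewrite h12 h23; reflexivity | rewrite h23 h12; reflexivity
  | rewrite h12 h23 h12; reflexivity ].

Definition PB n := forall x y z, (x + y + z <= n)%N -> (z <= y)%N -> (y + 2 <= x)%N ->
  h x y z <= h x.-1 y.+1 z.
Definition PA n := forall x y, (x + y + y <= n.+1)%N -> (1 <= y)%N -> (y + 1 <= x)%N ->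
  h x y y.-1 <= h x.-1 y y.
Definition PL n := forall x y z, (x + y + z <= n)%N -> (y <= x)%N -> (z + 2 <= y)%N ->
  h x y z <= h x.-1 y.-1 z.+2.

Lemma allP n : PB n /\ PA n /\ PL n.
Proof.
elim: n => [|n [IB [IA IL]]].
  split; [|split] => x y; rewrite /=; [move=> z|idtac|move=> z]; lia.
split; [|split].
-
  move=> x y z Hs Hzy Hyx.
  case: x Hs Hyx => [|[|x]] Hs Hyx; try lia.
  rewrite /=.
  case: y Hs Hzy Hyx => [|y] Hs Hzy Hyx.
    have -> : z = 0%N by lia.
    by rewrite h1 h_ge0.
  case: z Hs Hzy => [|z] Hs Hzy.
  + rewrite (h2S x.+1 y) (h2S x y.+1).
    have c1 : h x.+1 y.+1 0 <= h x y.+2 0.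
      case: (ltnP (y.+1) x) => Hxy.
        have := IB x.+1 y.+1 0%N ltac:(lia) ltac:(lia) ltac:(lia); by [].
      have -> : x = y.+1 by lia.
      rewrite le_eqVlt; apply/orP; left; apply/eqP; hperm.
    have c2 : h x.+2 y 0 <= h x.+1 y.+1 0.
      have := IB x.+2 y 0%N ltac:(lia) ltac:(lia) ltac:(lia); by [].
    lra.
  + rewrite (h3S x.+1 y z) (h3S x y.+1 z).
    have c1 : h x.+1 y.+1 z.+1 <= h x y.+2 z.+1.
      case: (ltnP (y.+1) x) => Hxy.
        have := IB x.+1 y.+1 z.+1 ltac:(lia) ltac:(lia) ltac:(lia); by [].
      have -> : x = y.+1 by lia.
      rewrite le_eqVlt; apply/orP; left; apply/eqP; hperm.
    have c2 : h x.+2 y z.+1 <= h x.+1 y.+1 z.+1.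
      case: (ltnP z y) => Hzy'.
        have := IB x.+2 y z.+1 ltac:(lia) ltac:(lia) ltac:(lia); by [].
      have E : y = z by lia.
      rewrite E h23.
      have := IA x.+2 z.+1 ltac:(lia) ltac:(lia) ltac:(lia); by [].
    have c3 : h x.+2 y.+1 z <= h x.+1 y.+2 z.
      have := IB x.+2 y.+1 z ltac:(lia) ltac:(lia) ltac:(lia); by [].
    lra.
-
  move=> x y Hs H1y Hyx.
  case: y Hs H1y Hyx => [|y] Hs H1y Hyx; first lia.
  case: x Hs Hyx => [|[|x]] Hs Hyx; try lia.
  rewrite /=.
  rewrite (h3S x y y).
  case: y Hs H1y Hyx => [|y] Hs H1y Hyx.
  + rewrite (h2S x.+1 0) h1.
    have c1 : h x.+1 1 0 <= h x 1 1.
      case: x Hs Hyx => [|x] Hs Hyx.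
        rewrite le_eqVlt; apply/orP; left; apply/eqP; hperm.
      have := IA x.+2 1%N ltac:(lia) ltac:(lia) ltac:(lia); by [].
    have -> : h x.+1 0 1 = h x.+1 1 0 by hperm.
    have := h_ge0 x.+1 1 0.
    lra.
  + rewrite (h3S x.+1 y.+1 y).
    have c1 : h x.+1 y.+2 y.+1 <= h x y.+2 y.+2.
      case: (ltnP (y.+1) x) => Hxy.
        have := IA x.+1 y.+2 ltac:(lia) ltac:(lia) ltac:(lia); by [].
      have -> : x = y.+1 by lia.
      rewrite le_eqVlt; apply/orP; left; apply/eqP; hperm.
    have c2 : h x.+2 y.+1 y.+1 <= h x.+1 y.+1 y.+2.
      rewrite (h23 x.+1).
      have := IB x.+2 y.+1 y.+1 ltac:(lia) ltac:(lia) ltac:(lia); by [].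
    have c3 : h x.+2 y.+2 y <= h x.+1 y.+2 y.+1.
      have -> : h x.+1 y.+2 y.+1 = h x.+1 y.+1 y.+2 by hperm.
      have := IL x.+2 y.+2 y ltac:(lia) ltac:(lia) ltac:(lia); by [].
    lra.
-
  move=> x y z Hs Hyx Hzy.
  case: y Hs Hyx Hzy => [|[|y]] Hs Hyx Hzy; try lia.
  case: x Hs Hyx => [|[|x]] Hs Hyx; try lia.
  rewrite /=.
  rewrite (h3S x y z.+1).
  have c1 : h x.+1 y.+2 z <= h x y.+1 z.+2.
    case: (ltnP y x) => Hxy.
      have := IL x.+1 y.+2 z ltac:(lia) ltac:(lia) ltac:(lia); by [].
    have E : x = y by lia.
    rewrite E (h12 y.+1) (h12 y).
    case: (ltnP z y) => Hzy'.
      have := IL y.+2 y.+1 z ltac:(lia) ltac:(lia) ltac:(lia); by [].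
    have -> : z = y by lia.
    rewrite le_eqVlt; apply/orP; left; apply/eqP; hperm.
  have c2 : h x.+2 y.+1 z <= h x.+1 y z.+2.
    case: (ltnP z y) => Hzy'.
      have := IL x.+2 y.+1 z ltac:(lia) ltac:(lia) ltac:(lia); by [].
    have E : z = y by lia.
    rewrite E (h23 x.+1 y).
    case: (ltnP y x) => Hxy.
      have := IB x.+2 y.+1 y ltac:(lia) ltac:(lia) ltac:(lia); by [].
    have -> : x = y by lia.
    rewrite le_eqVlt; apply/orP; left; apply/eqP; hperm.
  case: z Hs Hzy c1 c2 => [|z] Hs Hzy c1 c2.
  + rewrite (h2S x.+1 y.+1).
    have := G2 x.+1 y.+1; have := M2 x y.
    rewrite (h2S x.+1 y.+1).
    lra.
  + rewrite (h3S x.+1 y.+1 z).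
    have c3 : h x.+2 y.+2 z <= h x.+1 y.+1 z.+2.
      have := IL x.+2 y.+2 z ltac:(lia) ltac:(lia) ltac:(lia); by [].
    lra.
Qed.

Theorem lemma5 (l m s : nat) (hlm : (m <= l)%N) (hms : (s <= m)%N)
  (hms2 : (s + 2 <= m)%N) :
  h l m s <= h l.-1 m.-1 s.+2.
Proof.
have [_ [_ HL]] := allP (l + m + s).
exact: HL.
Qed.
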